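(* If a hard-core configuration $\sigma\in\mathcal{X}$ satisfies $\Delta H(\sigma)<L$, then there exists a path $\omega:\sigma\to\{\mathrm{e},\mathrm{o}\}$ with $\Phi_\omega\le H(\sigma)+1$. In particular, either $\sigma\in C_{\mathrm{e}}$ or $\sigma\in C_{\mathrm{o}}$.
   Context: $L\ge6$ even; $\Lambda=(V,E)$ is the $L\times L$ toric grid graph ($V=\{0,\dots,L-1\}^2$, adjacency = difference $\pm1$ mod $L$ in exactly one coordinate); even/odd sites by parity of coordinate sum. $\mathcal{X}=\{\sigma\in\{0,1\}^V:\sigma(v)\sigma(w)=0$ for adjacent $v,w\}$, $H(\sigma)=-\sum_v\sigma(v)$; $\mathrm{e}$ ($\mathrm{o}$) is the configuration with particles exactly on the even (odd) sites, $H(\mathrm{e})=H(\mathrm{o})=-L^2/2$, and $\Delta H(\sigma)=H(\sigma)-H(\mathrm{e})$. A path is a finite sequence of configurations in $\mathcal{X}$ in which consecutive configurations differ at exactly one site; its height is $\Phi_\omega=\max_{\eta\in\omega}H(\eta)$; a path $\sigma\to\{\mathrm{e},\mathrm{o}\}$ ends in $\mathrm{e}$ or $\mathrm{o}$. $\Phi(\sigma,\sigma')=\min_{\omega:\sigma\to\sigma'}\Phi_\omega$. It is known that $\Phi(\mathrm{e},\mathrm{o})-H(\mathrm{e})=L+1$. The initial cycles are $C_{\mathrm{e}}=\{\zeta\in\mathcal{X}:\Phi(\zeta,\mathrm{e})<\Phi(\mathrm{e},\mathrm{o})\}$ and $C_{\mathrm{o}}=\{\zeta\in\mathcal{X}:\Phi(\zeta,\mathrm{o})<\Phi(\mathrm{e},\mathrm{o})\}$.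 *)

(* Defs.v *)
From mathcomp Require Import all_boot all_order all_algebra.
Set Implicit Arguments. Unset Strict Implicit. Unset Printing Implicit Defensive.
Import Order.TTheory GRing.Theory Num.Theory.
Local Open Scope ring_scope.

Section HardCore.
Variable L : nat.

Definition site := ('I_L * 'I_L)%type.

Definition cyc_adj (i i' : 'I_L) : bool :=
  (((i + 1) %% L)%N == i') || (((i' + 1) %% L)%N == i).

Definition adj (v w : site) : bool :=
  ((v.1 == w.1) && cyc_adj v.2 w.2) || ((v.2 == w.2) && cyc_adj v.1 w.1).

Definition config := {ffun site -> bool}.

Definition hardcore (s : config) : bool :=
  [forall v, forall w, adj v w ==> ~~ (s v && s w)].

Definition Hc (s : config) : int := - (#|[set v | s v]|%:Z).

Definition conf_e : config := [ffun v : site => ~~ odd (v.1 + v.2)%N].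
Definition conf_o : config := [ffun v : site => odd (v.1 + v.2)%N].

Definition DeltaH (s : config) : int := Hc s - Hc conf_e.

Definition one_flip (s t : config) : bool := #|[set v | s v != t v]| == 1%N.

(* a path is given as  a :: p  (non-empty sequence) *)
Definition is_path (a : config) (p : seq config) : Prop :=
  all hardcore (a :: p) /\ path one_flip a p.

Definition path_from_to (a : config) (p : seq config) (b : config) : Prop :=
  is_path a p /\ last a p = b.

Definition height (a : config) (p : seq config) : int :=
  foldr (fun x m => Num.max (Hc x) m) (Hc a) p.

(* Phi(zeta, b) < Phi(e, o), unfolding Phi as a minimum over paths:
   some path zeta -> b has height strictly below that of every path e -> o *)
Definition Phi_lt_Phi_eo (z b : config) : Prop :=
  exists p, path_from_to z p b /\
    forall q, path_from_to conf_e q conf_o -> height z p < height conf_e q.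

Definition C_e (z : config) : Prop := hardcore z /\ Phi_lt_Phi_eo z conf_e.
Definition C_o (z : config) : Prop := hardcore z /\ Phi_lt_Phi_eo z conf_o.

(* Known fact: Phi(e,o) - H(e) = L + 1, with Phi(e,o) the minimal height *)
Definition Phi_eo_value : Prop :=
  (exists q, path_from_to conf_e q conf_o /\ height conf_e q = Hc conf_e + (L + 1)%:Z) /\
  (forall q, path_from_to conf_e q conf_o -> Hc conf_e + (L + 1)%:Z <= height conf_e q).

End HardCore.

(* Main.v *)
Require Import Defs.
From mathcomp Require Import all_boot all_order all_algebra.
From mathcomp Require Import zify.
Import Order.TTheory GRing.Theory Num.Theory.
Set Implicit Arguments. Unset Strict Implicit.

Lemma ord_pos L (i : 'I_L) : (0 < L)%N.
Proof. exact: leq_ltn_trans (leq0n i) (ltn_ord i). Qed.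

Definition sc L (i : 'I_L) : 'I_L := Ordinal (ltn_pmod (i + 1) (ord_pos i)).

Lemma succ_mod L a : (a < L)%N -> ((a + 1) %% L = if a.+1 == L then 0 else a.+1)%N.
Proof.
move=> aL; rewrite addn1; case: eqP => [->|h]; first by rewrite modnn.
by rewrite modn_small //; lia.
Qed.

Lemma sc_inj L : injective (@sc L).
Proof.
move=> a b /(congr1 val) /=; rewrite !succ_mod //.
move=> h; apply: val_inj => /=; move: h.
case: eqP; case: eqP; lia.
Qed.

Lemma odd_succ_mod L a : ~~ odd L -> (a < L)%N -> odd ((a + 1) %% L) = ~~ odd a.
Proof.
move=> ev aL; rewrite succ_mod //; case: eqP => [h|_]; last by [].
by move: ev; rewrite -h /= negbK => ->.
Qed.

Lemma cyc_adj_odd L (i j : 'I_L) : ~~ odd L -> cyc_adj i j -> odd j = ~~ odd i.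
Proof.
move=> ev; rewrite /cyc_adj; case/orP => /eqP <-.
  by rewrite odd_succ_mod.
by rewrite odd_succ_mod // negbK.
Qed.

Definition tgt {L} (b : bool) : config L := [ffun v : site L => odd (v.1 + v.2) (+) b].

Lemma adj_tgt L b (v w : site L) : ~~ odd L -> adj v w -> tgt b w = ~~ tgt b v.
Proof.
move=> ev; rewrite /adj !ffunE !oddD.
case/orP => /andP [/eqP e h].
  by rewrite e (cyc_adj_odd ev h); case: (odd w.1); case: (odd v.2); case: b.
by rewrite e (cyc_adj_odd ev h); case: (odd w.2); case: (odd v.1); case: b.
Qed.

Lemma cyc_adj_sym L (i j : 'I_L) : cyc_adj i j = cyc_adj j i.
Proof. by rewrite /cyc_adj orbC. Qed.

Lemma adj_sym L (v w : site L) : adj v w = adj w v.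
Proof. by rewrite /adj cyc_adj_sym (cyc_adj_sym v.1) (eq_sym v.1) (eq_sym v.2). Qed.

Lemma hc_adj L (s : config L) v w : hardcore s -> adj v w -> s w -> s v = false.
Proof.
move=> /forallP /(_ v) /forallP /(_ w) /implyP H a sw.
by move: (H a); rewrite sw andbT => /negbTE.
Qed.

Lemma adj_sc2 L (i j : 'I_L) : adj (i, j) (i, sc j).
Proof. by rewrite /adj /cyc_adj /= eqxx eqxx. Qed.

Lemma adj_sc1 L (i j : 'I_L) : adj (sc i, j) (i, j).
Proof. by rewrite /adj /cyc_adj /= eqxx eqxx !orbT. Qed.

Lemma conf_e_tgt L : conf_e L = tgt true.
Proof. by apply/ffunP => v; rewrite !ffunE addbT. Qed.
Lemma conf_o_tgt L : conf_o L = tgt false.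
Proof. by apply/ffunP => v; rewrite !ffunE addbF. Qed.

Definition rc L (s : config L) (i : 'I_L) : nat := (\sum_(j < L) (s (i, j) : nat))%N.

Lemma card_rows L (s : config L) : #|[set v | s v]| = (\sum_(i < L) rc s i)%N.
Proof.
rewrite /rc pair_bigA -sum1_card big_mkcond /=.
by apply: eq_bigr => [[i j]] _; rewrite inE /=; case: (s (i, j)).
Qed.

Lemma sum_sc L (f : 'I_L -> nat) : (\sum_j f (sc j) = \sum_j f j)%N.
Proof. by symmetry; apply: (reindex_inj (@sc_inj L)). Qed.

Lemma pair_sum L (f : 'I_L -> nat) : (\sum_j (f j + f (sc j)) = 2 * \sum_j f j)%N.
Proof. by rewrite big_split /= sum_sc mul2n addnn. Qed.

Lemma sum1L L : (\sum_(j < L) 1 = L)%N.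
Proof. by rewrite sum1_card card_ord. Qed.

Lemma row_bound L (s : config L) i : hardcore s -> (2 * rc s i <= L)%N.
Proof.
move=> hs; rewrite /rc -pair_sum -[X in (_ <= X)%N]sum1L; apply: leq_sum => j _.
case e: (s (i, sc j)); last by rewrite addn0; case: (s (i, j)).
by rewrite (hc_adj hs (adj_sc2 i j) e).
Qed.

Lemma tgt_row L b i : ~~ odd L -> (2 * rc (@tgt L b) i = L)%N.
Proof.
move=> ev; rewrite /rc -pair_sum -[X in _ = X]sum1L; apply: eq_bigr => j _.
rewrite !ffunE /= !oddD odd_succ_mod //.
by case: (odd i); case: (odd j); case: b.
Qed.

Lemma all_one L (g : 'I_L -> nat) : (forall j, g j <= 1)%N -> (\sum_j g j = L)%N ->
  forall j, g j = 1%N.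
Proof.
move=> le sum j; apply/eqP; rewrite eqn_leq le /= lt0n; apply/negP => /eqP g0.
move: sum; rewrite (bigD1 j) //= g0 add0n => h.
have h1 : (\sum_(k < L | k != j) g k <= \sum_(k < L | k != j) 1)%N by apply: leq_sum.
have h2 := sum1L L; rewrite (bigD1 j) //= in h2.
move: h h1 h2; set A := (\sum_(k < L | k != j) g k)%N; set B := (\sum_(k < L | k != j) 1)%N; lia.
Qed.

Lemma exists_row L (s : config L) : ~~ odd L -> hardcore s ->
  (#|[set v | conf_e L v]| < #|[set v | s v]| + L)%N -> exists i, (2 * rc s i = L)%N.
Proof.
move=> ev hs hlt; case: (boolP [exists i, 2 * rc s i == L]).
  by case/existsP => i /eqP; exists i.
rewrite negb_exists => /forallP hn; exfalso.
have : (\sum_i (rc s i + 1) <= \sum_i rc (conf_e L) i)%N.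
  apply: leq_sum => i _; have := hn i; have := row_bound i hs.
  have := tgt_row true i ev; rewrite -conf_e_tgt; lia.
rewrite big_split /= sum1L -!card_rows; lia.
Qed.

Lemma row_pattern L (s : config L) i : hardcore s -> (2 * rc s i = L)%N ->
  forall j, s (i, j) = s (i, Ordinal (ord_pos i)) (+) odd j.
Proof.
move=> hs h.
have one : forall j, (s (i, j) + s (i, sc j))%N = 1%N.
  apply: all_one; last by rewrite pair_sum.
  move=> j; case e: (s (i, sc j)); last by rewrite addn0; case: (s (i, j)).
  by rewrite (hc_adj hs (adj_sc2 i j) e).
have key : forall k (hk : (k < L)%N), s (i, Ordinal hk) = s (i, Ordinal (ord_pos i)) (+) odd k.
  elim => [|k IH] hk.
    by rewrite addbF; congr (s (i, _)); apply: val_inj.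
  have hk' : (k < L)%N by apply: ltnW.
  have e : sc (Ordinal hk') = Ordinal hk by apply: val_inj; rewrite /= addn1 modn_small.
  have := one (Ordinal hk'); rewrite e IH /=.
  by case: (s (i, Ordinal hk)); case: (s _); case: (odd k).
by move=> [j hj]; exact: key.
Qed.

Definition upd L (s : config L) (v : site L) (c : bool) : config L :=
  [ffun w => if w == v then c else s w].
Definition fullb L b (s : config L) r := [forall j, tgt b (r, j) ==> s (r, j)].
Definition mism L b (s : config L) := #|[set v | s v != tgt b v]|.

Lemma one_flip_upd L (s : config L) v c : s v != c -> one_flip s (upd s v c).
Proof.
move=> ne; rewrite /one_flip; apply/eqP.
suff -> : [set w | s w != upd s v c w] = [set v] by rewrite cards1.
apply/setP => w; rewrite !inE ffunE; case: (w =P v) => [->|nv]; first by rewrite ne.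
by rewrite eqxx.
Qed.

Local Open Scope ring_scope.

Lemma Hc_add L (s : config L) v : s v = false -> Hc (upd s v true) = Hc s - 1.
Proof.
move=> sv; rewrite /Hc.
suff -> : [set w | upd s v true w] = v |: [set w | s w].
  by rewrite cardsU1 inE sv /= PoszD opprD addrC.
by apply/setP => w; rewrite !inE ffunE; case: eqP.
Qed.

Lemma Hc_rem L (s : config L) v : s v = true -> Hc (upd s v false) = Hc s + 1.
Proof.
move=> sv; rewrite /Hc (cardsD1 v [set w | s w]) inE sv.
suff -> : [set w | upd s v false w] = [set w | s w] :\ v.
  by rewrite /= PoszD opprD; lia.
by apply/setP => w; rewrite !inE ffunE; case: eqP.
Qed.

Local Close Scope ring_scope.

Lemma hc_rem L (s : config L) v : hardcore s -> hardcore (upd s v false).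
Proof.
move=> hs; apply/forallP => a; apply/forallP => c; apply/implyP => h.
rewrite !ffunE; case: eqP => _ //; case: eqP => _; first by rewrite andbF.
by apply/negP => /andP [sa sc']; move: sa; rewrite (hc_adj hs h sc').
Qed.

Lemma hc_add L (s : config L) v : ~~ odd L -> hardcore s ->
  (forall w, adj v w -> s w = false) -> hardcore (upd s v true).
Proof.
move=> ev hs nb; apply/forallP => a; apply/forallP => c; apply/implyP => h.
rewrite !ffunE; case: eqP => [ea|na]; case: eqP => [ec|nc].
- by move: h; rewrite ea ec => h; have := adj_tgt true ev h; case: (tgt true v).
- by rewrite ea in h; rewrite (nb c h).
- by rewrite ec adj_sym in h; rewrite (nb a h).
- by apply/negP => /andP [sa sc']; move: sa; rewrite (hc_adj hs h sc').
Qed.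

Lemma mism_upd L b (s : config L) v : s v != tgt b v -> (mism b (upd s v (tgt b v)) < mism b s)%N.
Proof.
move=> ne; rewrite /mism (cardsD1 v [set w | s w != tgt b w]) inE ne add1n ltnS.
apply: subset_leq_card; apply/subsetP => w; rewrite !inE ffunE.
by case: (w =P v) => [->|]; rewrite ?eqxx.
Qed.

Lemma full_upd_true L b (s : config L) r v : fullb b s r -> fullb b (upd s v true) r.
Proof.
move=> /forallP f; apply/forallP => j; rewrite [upd _ _ _ _]ffunE; case: ((r, j) =P v) => [_|_]; rewrite ?implybT //; exact: f.
Qed.

Lemma full_upd_nt L b (s : config L) r v : tgt b v = false -> fullb b s r -> fullb b (upd s v false) r.
Proof.
move=> tv /forallP f; apply/forallP => j; rewrite [upd _ _ _ _]ffunE; case: ((r, j) =P v) => [e|_]; first by rewrite e tv.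
exact: f.
Qed.

Lemma height_le L (a : config L) p M : (height a p <= M)%R = (Hc a <= M)%R && all (fun x => Hc x <= M)%R p.
Proof.
elim: p => [|x p IH] /=; first by rewrite andbT.
by rewrite ge_max IH andbCA.
Qed.

Lemma all_full L b (s : config L) : ~~ odd L -> hardcore s -> (forall r, fullb b s r) -> s = tgt b.
Proof.
move=> ev hs f; apply/ffunP => [[i j]].
case t: (tgt b (i, j)); first by have := forallP (f i) j; rewrite t.
have a := adj_sc2 i j; have := adj_tgt b ev a; rewrite t /= => t'.
have := forallP (f i) (sc j); rewrite t' /= => s'.
by rewrite (hc_adj hs a s').
Qed.

Lemma find_edge L b (s : config L) r0 r1 : fullb b s r0 -> ~~ fullb b s r1 ->
  exists r, fullb b s r && ~~ fullb b s (sc r).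
Proof.
move=> f0 n1; case: (boolP [exists r, fullb b s r && ~~ fullb b s (sc r)]).
  by case/existsP => r h; exists r.
rewrite negb_exists => /forallP h; exfalso.
have L0 := ord_pos r0.
pose rk k : 'I_L := Ordinal (ltn_pmod (r0 + k) L0).
have fk : forall k, fullb b s (rk k).
  elim => [|k IH]; first by have -> : rk 0 = r0 by apply: val_inj; rewrite /= addn0 modn_small.
  have := h (rk k); rewrite IH /= negbK.
  have -> // : sc (rk k) = rk k.+1.
  by apply: val_inj; rewrite /= modnDml addn1 addnS.
have : rk (r1 + (L - r0)) = r1.
  apply: val_inj; rewrite /= addnC -addnA subnK; last exact: ltnW.
  by rewrite addnC modnDl modn_small.
by move=> e; move: n1; rewrite -e fk.
Qed.

Lemma mism0 L b (s : config L) : s != tgt b -> (0 < mism b s)%N.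
Proof.
move=> ne; rewrite /mism card_gt0; apply: contra ne => /eqP e.
apply/eqP/ffunP => v; apply/eqP.
by have := in_set0 v; rewrite -e inE => /negbFE.
Qed.

Lemma nbr L b (s : config L) r j : ~~ odd L -> hardcore s -> fullb b s r ->
  tgt b (sc r, j) -> forall w, adj (sc r, j) w -> w != (sc (sc r), j) -> s w = false.
Proof.
move=> ev hs f tx [w1 w2] a ne.
have tw : tgt b (w1, w2) = false by rewrite (adj_tgt b ev a) tx.
move: (a); rewrite /adj /=; case/orP => /andP [/eqP e c].
  have a' : adj (w1, w2) (r, w2) by rewrite -e; apply: adj_sc1.
  have := adj_tgt b ev a'; rewrite tw /= => t'.
  have := forallP f w2; rewrite t' /= => s'.
  exact: hc_adj hs a' s'.
case/orP: c => /eqP c.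
  have ew : w1 = sc (sc r) by apply: val_inj; rewrite /= -c.
  by move: ne; rewrite -e ew eqxx.
have er : w1 = r by apply: (@sc_inj L); apply: val_inj; rewrite /= c.
have a' := adj_sc2 w1 w2.
have := adj_tgt b ev a'; rewrite tw /= => t'.
have := forallP f (sc w2); rewrite -er t' /= => s'.
exact: hc_adj hs a' s'.
Qed.

Local Open Scope ring_scope.

Lemma reach L b (ev : ~~ odd L) n : forall s : config L, (mism b s <= n)%N -> hardcore s ->
  (exists r, fullb b s r) ->
  exists p, path_from_to s p (tgt b) /\ height s p <= Hc s + 1.
Proof.
elim: n => [|n IH] s hm hs [r0 f0].
  have e : s = tgt b.
    by apply/eqP; apply: contraT => ne; have := mism0 ne; rewrite lt0n; move: hm; rewrite leqn0 => ->.
  exists [::]; split; first by rewrite /path_from_to /is_path /= hs e.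
  by rewrite /height /=; lia.
case: (eqVneq s (tgt b)) => [e|ne].
  exists [::]; split; first by rewrite /path_from_to /is_path /= hs e.
  by rewrite /height /=; lia.
have [r1 nf1] : exists r1, ~~ fullb b s r1.
  apply/existsP; apply: contraT; rewrite negb_exists => /forallP h.
  by move: ne; rewrite (all_full ev hs (fun r => negbNE (h r))) eqxx.
have [r /andP [fr nfr]] := find_edge f0 nf1.
move: nfr; rewrite negb_forall => /existsP [j]; rewrite negb_imply => /andP [tx sx].
rewrite -/(negb _) in sx; move/negbTE: sx => sx.
set x := (sc r, j) in tx sx.
set y := (sc (sc r), j).
have nb := nbr ev hs fr tx.
have ty : tgt b y = false.
  by have := adj_tgt b ev (adj_sc1 (sc r) j); rewrite -/x -/y tx; case: (tgt b y).
case sy: (s y).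
-
  pose t := upd s y false.
  have ht : hardcore t by apply: hc_rem.
  have nbt : forall w, adj x w -> t w = false.
    move=> w a; rewrite /t ffunE; case: (w =P y) => // /eqP; exact: nb.
  have tx' : t x = false by rewrite /t ffunE; case: (x =P y) => // xy; move: ty; rewrite -xy tx.
  pose s' := upd t x true.
  have hs' : hardcore s' by apply: hc_add.
  have ft : fullb b t r by apply: full_upd_nt.
  have fs' : fullb b s' r by apply: full_upd_true.
  have m1 : (mism b t < mism b s)%N by rewrite /t -ty; apply: mism_upd; rewrite sy ty.
  have m2 : (mism b s' < mism b t)%N by rewrite /s' -tx; apply: mism_upd; rewrite tx' tx.
  have hm' : (mism b s' <= n)%N by rewrite -ltnS; exact: leq_trans (ltn_trans m2 m1) hm.
  have [q [[hq1 hq2] hq3]] := IH s' hm' hs' (ex_intro _ r fs').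
  have Ht : Hc t = Hc s + 1 by apply: Hc_rem.
  have Hs' : Hc s' = Hc t - 1 by apply: Hc_add.
  exists (t :: s' :: q); split.
    split; last by [].
    move: hq1 => [hq1 hq1']; split; first by apply/andP; split; [exact: hs | apply/andP; split; [exact: ht | exact: hq1]].
    apply/andP; split; first by apply: one_flip_upd; rewrite sy.
    apply/andP; split; last exact: hq1'.
    by apply: one_flip_upd; rewrite tx'.
  have hq3' : height s' q <= Hc s + 1 by apply: le_trans hq3 _; rewrite Hs' Ht addrK.
  move: hq3'; rewrite !height_le /= => /andP [h1 ->]; rewrite h1 !andbT Ht lexx andbT lerDl.
  by [].
-
  have nbs : forall w, adj x w -> s w = false.
    move=> w a; case: (w =P y) => [->|/eqP]; [exact: sy | exact: nb].
  pose s' := upd s x true.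
  have hs' : hardcore s' by apply: hc_add.
  have fs' : fullb b s' r by apply: full_upd_true.
  have m2 : (mism b s' < mism b s)%N by rewrite /s' -tx; apply: mism_upd; rewrite sx tx.
  have hm' : (mism b s' <= n)%N by rewrite -ltnS; exact: leq_trans m2 hm.
  have [q [[hq1 hq2] hq3]] := IH s' hm' hs' (ex_intro _ r fs').
  have Hs' : Hc s' = Hc s - 1 by apply: Hc_add.
  exists (s' :: q); split.
    split; last by [].
    move: hq1 => [hq1 hq1']; split; first by apply/andP; split; [exact: hs | exact: hq1].
    apply/andP; split; last exact: hq1'.
    by apply: one_flip_upd; rewrite sx.
  have hq3' : height s' q <= Hc s + 1 by apply: le_trans hq3 _; rewrite Hs' subrK lerDl.
  move: hq3'; rewrite !height_le /= => /andP [h1 ->]; rewrite h1 !andbT lerDl.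
  by [].
Qed.

Theorem lemma4p1 (L : nat) (hLeven : ~~ odd L) (hL6 : (6 <= L)%N)
  (hPhi : Phi_eo_value L) (s : config L) (hs : hardcore s)
  (hD : DeltaH s < L%:Z) :
  (exists p, (path_from_to s p (conf_e L) \/ path_from_to s p (conf_o L)) /\
             height s p <= Hc s + 1)
  /\ (C_e s \/ C_o s).
Proof.
have hlt : (#|[set v | conf_e L v]| < #|[set v | s v]| + L)%N.
  move: hD; rewrite /DeltaH /Hc.
  move: #|[set v | conf_e L v]| #|[set v | s v]| => a c; lia.
have [i hi] := exists_row hLeven hs hlt.
have pat := row_pattern hs hi.
set b := s (i, Ordinal (ord_pos i)) (+) odd i.
have fi : fullb b s i.
  apply/forallP => j; rewrite ffunE /= pat oddD /b.
  by case: (odd i); case: (odd j); case: (s _).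
have [p [hp hh]] := reach hLeven (leqnn (mism b s)) hs (ex_intro _ i fi).
have hp' : path_from_to s p (conf_e L) \/ path_from_to s p (conf_o L).
  by rewrite conf_e_tgt conf_o_tgt; case: (b) hp; [left | right].
split; first by exists p.
have key : forall q, path_from_to (conf_e L) q (conf_o L) -> height s p < height (conf_e L) q.
  move=> q hq; have := hPhi.2 q hq; move: hh hD; rewrite /DeltaH.
  move: (height s p) (Hc s) (Hc (conf_e L)) (height (conf_e L) q) => h1 h2 h3 h4; lia.
case: hp' => hp'; [left | right]; split => //; exists p; split => //.
Qed.
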